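(* Fix an increasing sequence of positive integers $(q_\ell)_{\ell\in\mathcal L}$, $\mathcal L$ a (finite or infinite) set of consecutive integers starting at $0$, and for $d\in(\frac12(1-1/q_0),\frac12)$ let $\nu_c(d)$ be the critical exponent defined below. Then: (i) if $q_0=1$, $\nu_c(d)$ is non-increasing in $d$; (ii) if $q_0\ge2$, $\nu_c(d)$ is non-decreasing in $d$.
   Context: For $q\ge1$, $\delta(q)=qd-(q-1)/2$ and $\delta_+(q)=\max(\delta(q),0)$. For $r\ge0$ let $I_r=\{\ell\in\mathcal L:\ell+1\in\mathcal L,\ q_{\ell+1}=q_\ell+r+1\}$ and $\ell_r=\min I_r$ when $I_r\ne\emptyset$; $\mathcal R_d=\{r\ge0:I_r\ne\emptyset,\ \delta(r+1)>0\}$; $J_d=\{\ell\in\mathcal L:\ell+1\in\mathcal L,\ \delta(q_{\ell+1}-q_\ell)>0\}$. Critical exponent: $\nu_c=\infty$ if $\mathcal L=\{0\}$; $\infty$ if $q_0=1,d\le1/4,I_0=\emptyset$; $\frac{d+1/2-2\delta_+(q_{\ell_0})}{d}$ if $q_0=1,d\le1/4,I_0\ne\emptyset$; $\frac{1-2\delta_+(q_1-1)}{2d-1/2}$ if $q_0=1,d>1/4,1\in\mathcal L,J_d=\emptyset$; $\min\big(\frac{1-2\delta_+(q_1-1)}{2d-1/2},\frac{2d+1/2-2\delta_+(q_{\ell_r})-\delta(r+1)}{\delta(r+1)}:r\in\mathcal R_d\big)$ if $q_0=1,d>1/4,J_d\ne\emptyset$; $\infty$ if $q_0\ge2,I_0=\emptyset$;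 $1+\frac{4(\delta(q_0)-\delta_+(q_{\ell_0}))}{1-2d}$ if $q_0\ge2,I_0\ne\emptyset$. Monotonicity is in the extended reals $(0,\infty]$. *)

(* Defs.v *)
From Stdlib Require Import Reals Lra Classical ClassicalEpsilon ClassicalDescription.
Open Scope R_scope.

(* Extended reals (0,oo]: [Some x] is the real x, [None] is +oo. *)
Definition ext_le (x y : option R) : Prop :=
  match y with
  | None => True
  | Some b => match x with None => False | Some a => a <= b end
  end.

Definition delta (d x : R) : R := x * d - (x - 1) / 2.
Definition deltap (d x : R) : R := Rmax (delta d x) 0.

Section NuC.
Variables (L : nat -> Prop) (q : nat -> nat).

Definition Iset (r l : nat) : Prop :=
  L l /\ L (S l) /\ q (S l) = (q l + r + 1)%nat.

(* l_r = min I_r (meaningful when I_r is nonempty). *)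
Definition ell (r : nat) : nat :=
  epsilon (inhabits 0%nat) (fun l => Iset r l /\ forall m, Iset r m -> (l <= m)%nat).

Definition Rset (d : R) (r : nat) : Prop :=
  (exists l, Iset r l) /\ delta d (INR r + 1) > 0.

Definition Jne (d : R) : Prop :=
  exists l, L l /\ L (S l) /\ delta d (INR (q (S l)) - INR (q l)) > 0.

Definition term0 (d : R) : R :=
  (1 - 2 * deltap d (INR (q 1%nat) - 1)) / (2 * d - 1 / 2).

Definition termr (d : R) (r : nat) : R :=
  (2 * d + 1 / 2 - 2 * deltap d (INR (q (ell r))) - delta d (INR r + 1))
    / delta d (INR r + 1).

(* min( term0, termr r : r in R_d )  (the set R_d is finite for d < 1/2) *)
Definition min_terms (d : R) : R :=
  epsilon (inhabits 0)
    (fun v => (v = term0 d \/ exists r, Rset d r /\ v = termr d r)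
              /\ v <= term0 d /\ forall r, Rset d r -> v <= termr d r).

Definition decP (P : Prop) : bool :=
  if excluded_middle_informative P then true else false.

Definition nu_c (d : R) : option R :=
  if decP (~ L 1%nat) then None
  else if Nat.eqb (q 0%nat) 1 then
    if decP (d <= 1 / 4) then
      if decP (exists l, Iset 0 l) then
        Some ((d + 1 / 2 - 2 * deltap d (INR (q (ell 0)))) / d)
      else None
    else
      if decP (Jne d) then Some (min_terms d) else Some (term0 d)
  else
    if decP (exists l, Iset 0 l) then
      Some (1 + 4 * (delta d (INR (q 0%nat)) - deltap d (INR (q (ell 0)))) / (1 - 2 * d))
    else None.

End NuC.

(* Main.v *)
From Stdlib Require Import Reals Lra Psatz Lia Arith Classical ClassicalEpsilon.
Require Import Defs.
Open Scope R_scope.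

Lemma decP_t (P : Prop) : P -> decP P = true.
Proof. intro. unfold decP. destruct (ClassicalDescription.excluded_middle_informative P); [reflexivity|contradiction]. Qed.
Lemma decP_f (P : Prop) : ~P -> decP P = false.
Proof. intro. unfold decP. destruct (ClassicalDescription.excluded_middle_informative P); [contradiction|reflexivity]. Qed.

Lemma least (P : nat -> Prop) : (exists n, P n) -> exists m, P m /\ forall k, P k -> (m <= k)%nat.
Proof.
  intros [n Hn]. destruct (classic (exists m, P m /\ forall k, P k -> (m<=k)%nat)) as [h|h]; auto.
  exfalso. assert (forall n k, (k <= n)%nat -> ~ P k).
  { induction n0; intros k Hk Pk.
    - apply h. exists k; split; auto; intros; lia.
    - destruct (le_lt_dec k n0). apply (IHn0 k); auto.
      apply h. exists k; split; auto. intros j Pj. destruct (le_lt_dec k j); auto.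
      exfalso; apply (IHn0 j); auto; lia. }
  apply (H n n); auto.
Qed.

Lemma ell_spec L q r : (exists l, Iset L q r l) -> Iset L q r (ell L q r).
Proof. intros H. unfold ell.
  apply (epsilon_spec (inhabits 0%nat) (fun l => Iset L q r l /\ forall m, Iset L q r m -> (l <= m)%nat)).
  now apply least. Qed.

Lemma fin_min (a : R) (f : nat -> R) (P : nat -> Prop) N : exists v,
  (v = a \/ exists r, P r /\ v = f r) /\ v <= a /\ forall r, P r -> (r < N)%nat -> v <= f r.
Proof.
  induction N.
  - exists a. split; auto. split. lra. intros; lia.
  - destruct IHN as [v [H1 [H2 H3]]].
    destruct (classic (P N /\ f N < v)) as [[HP Hf]|Hn].
    + exists (f N). split. right; eauto. split. lra. intros r Pr Hr.
      destruct (Nat.eq_dec r N). subst; lra. specialize (H3 r Pr ltac:(lia)). lra.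
    + exists v. split; auto. split; auto. intros r Pr Hr.
      destruct (Nat.eq_dec r N). subst. apply Rnot_lt_le. intro; apply Hn; auto.
      apply H3; auto; lia.
Qed.

Lemma min_spec L q d : 1/4 < d -> d < 1/2 ->
  let v := min_terms L q d in
  (v = term0 q d \/ exists r, Rset L q d r /\ v = termr L q d r) /\ v <= term0 q d
  /\ forall r, Rset L q d r -> v <= termr L q d r.
Proof.
  intros H1 H2 v. unfold v, min_terms.
  apply (epsilon_spec (inhabits 0) (fun v => (v = term0 q d \/ exists r, Rset L q d r /\ v = termr L q d r)
              /\ v <= term0 q d /\ forall r, Rset L q d r -> v <= termr L q d r)).
  destruct (archimed_cor1 (1 - 2*d) ltac:(lra)) as [N [HN HN0]].
  destruct (fin_min (term0 q d) (termr L q d) (Rset L q d) N) as [v0 [A [B C]]].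
  exists v0. split; auto. split; auto. intros r Hr. apply C; auto.
  destruct Hr as [_ Hr]. unfold delta in Hr.
  destruct (le_lt_dec N r) as [h|h]; auto. exfalso.
  apply le_INR in h. apply lt_INR in HN0. simpl in HN0.
  assert (INR N * (/ INR N) = 1) by (field; lra).
  assert (0 < / INR N) by (apply Rinv_0_lt_compat; lra).
  nra.
Qed.
Lemma div_le a b x y : 0<x -> 0<y -> a*y <= b*x -> a/x <= b/y.
Proof. intros. unfold Rdiv. apply Rmult_le_reg_r with (x*y). nra.
replace (a*/x*(x*y)) with (a*y) by (field; lra).
replace (b*/y*(x*y)) with (b*x) by (field; lra). lra. Qed.

Lemma mono2 Q0 Q d1 d2 : 0 <= Q -> d1 <= d2 -> d2 < 1/2 ->
  1 + 4 * (delta d1 Q0 - deltap d1 Q) / (1 - 2 * d1) <=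
  1 + 4 * (delta d2 Q0 - deltap d2 Q) / (1 - 2 * d2).
Proof. intros. apply Rplus_le_compat_l. apply div_le; try lra.
unfold deltap, delta, Rmax.
destruct (Rle_dec (Q*d1 - (Q-1)/2) 0); destruct (Rle_dec (Q*d2 - (Q-1)/2) 0); nra. Qed.

Lemma monoA Q d1 d2 : 1 <= Q -> 0 < d1 -> d1 <= d2 -> d2 < 1/2 ->
  (d2 + 1/2 - 2 * deltap d2 Q)/d2 <= (d1 + 1/2 - 2 * deltap d1 Q)/d1.
Proof. intros. apply div_le; try lra.
unfold deltap, delta, Rmax.
destruct (Rle_dec (Q*d1 - (Q-1)/2) 0); destruct (Rle_dec (Q*d2 - (Q-1)/2) 0); nra. Qed.

Lemma mono0 P d1 d2 : 1 <= P -> 1/4 < d1 -> d1 <= d2 -> d2 < 1/2 ->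
  (1 - 2 * deltap d2 P) / (2 * d2 - 1 / 2) <= (1 - 2 * deltap d1 P) / (2 * d1 - 1 / 2).
Proof. intros. apply div_le; try lra.
unfold deltap, delta, Rmax.
destruct (Rle_dec (P*d1 - (P-1)/2) 0); destruct (Rle_dec (P*d2 - (P-1)/2) 0); nra. Qed.

Lemma monor Q s d1 d2 : 1 <= Q -> 1 <= s -> 1/4 < d1 -> d1 <= d2 -> d2 < 1/2 ->
  delta d1 s > 0 ->
  (2 * d2 + 1 / 2 - 2 * deltap d2 Q - delta d2 s) / delta d2 s <=
  (2 * d1 + 1 / 2 - 2 * deltap d1 Q - delta d1 s) / delta d1 s.
Proof. intros. unfold delta in *. apply div_le; try nra.
unfold deltap, delta, Rmax.
destruct (Rle_dec (Q*d1 - (Q-1)/2) 0); destruct (Rle_dec (Q*d2 - (Q-1)/2) 0); nra. Qed.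

Lemma decP_iff (P : Prop) : decP P = true -> P.
Proof. unfold decP. destruct (ClassicalDescription.excluded_middle_informative P); auto; discriminate. Qed.

Lemma ext_le_None x : ext_le x None. Proof. exact I. Qed.
Lemma ext_le_Some a b : a <= b -> ext_le (Some a) (Some b). Proof. simpl; auto. Qed.
Lemma if_some (b : bool) (x y : R) : (if b then Some x else Some y) = Some (if b then x else y).
Proof. destruct b; auto. Qed.

Lemma INR_ge1 n : (1<=n)%nat -> 1 <= INR n.
Proof. intro H; apply le_INR in H; simpl in H; exact H. Qed.

Lemma rset_jne L q d r : Rset L q d r -> Jne L q d.
Proof. intros [[l [HLl [HLSl Hq]]] Hd]. exists l. split; auto. split; auto.
  replace (INR (q (S l)) - INR (q l)) with (INR r + 1); auto.
  rewrite Hq, !plus_INR; simpl; lra. Qed.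

Lemma val_spec L q d : 1/4 < d -> d < 1/2 ->
  let v := if decP (Jne L q d) then min_terms L q d else term0 q d in
  (v = term0 q d \/ exists r, Rset L q d r /\ v = termr L q d r) /\ v <= term0 q d
  /\ forall r, Rset L q d r -> v <= termr L q d r.
Proof.
  intros H1 H2 v. unfold v. destruct (decP (Jne L q d)) eqn:E.
  - apply min_spec; auto.
  - split; auto. split. lra. intros r Hr. exfalso.
    rewrite decP_t in E. discriminate. eapply rset_jne; eauto.
Qed.

Lemma termr0 L q d : termr L q d 0 = (d + 1/2 - 2 * deltap d (INR (q (ell L q 0))))/d.
Proof. unfold termr. replace (delta d (INR 0 + 1)) with d by (unfold delta; simpl; lra).
  f_equal. lra. Qed.

Theorem lemma9p5 (L : nat -> Prop) (q : nat -> nat)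
  (HL0 : L 0%nat)
  (HLdown : forall n, L (S n) -> L n)
  (Hpos : forall n, L n -> (1 <= q n)%nat)
  (Hinc : forall n, L (S n) -> (q n < q (S n))%nat) :
  (q 0%nat = 1%nat ->
     forall d1 d2 : R,
       1 / 2 * (1 - 1 / INR (q 0%nat)) < d1 -> d1 <= d2 -> d2 < 1 / 2 ->
       ext_le (nu_c L q d2) (nu_c L q d1)) /\
  ((2 <= q 0%nat)%nat ->
     forall d1 d2 : R,
       1 / 2 * (1 - 1 / INR (q 0%nat)) < d1 -> d1 <= d2 -> d2 < 1 / 2 ->
       ext_le (nu_c L q d1) (nu_c L q d2)).
Proof.
  assert (Hell : forall r, (exists l, Iset L q r l) -> 1 <= INR (q (ell L q r))).
  { intros r H. apply ell_spec in H. destruct H as [H _]. apply INR_ge1, Hpos, H. }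
  split.
  - intros Hq0 d1 d2 Hd1 H12 Hd2. rewrite Hq0 in Hd1. simpl in Hd1.
    assert (Hd1p : 0 < d1) by lra.
    unfold nu_c. destruct (classic (L 1%nat)) as [HL1|HL1];
      [| rewrite decP_t by auto; apply ext_le_None].
    rewrite decP_f by tauto. rewrite Hq0. simpl Nat.eqb. cbv iota.
    assert (Hq1 : 2 <= INR (q 1%nat)).
    { pose proof (Hinc 0%nat HL1) as h. rewrite Hq0 in h. apply le_INR in h. simpl in h. lra. }
    destruct (classic (d2 <= 1/4)) as [H2|H2].
    + rewrite (decP_t (d2 <= 1/4)) by lra. rewrite (decP_t (d1 <= 1/4)) by lra.
      destruct (classic (exists l, Iset L q 0 l)) as [HI|HI];
        [rewrite decP_t by auto | rewrite decP_f by auto; apply ext_le_None].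
      apply ext_le_Some. apply monoA; auto; lra.
    + rewrite (decP_f (d2 <= 1/4)) by auto. rewrite if_some.
      destruct (val_spec L q d2 ltac:(lra) Hd2) as [_ [S20 S2r]].
      destruct (classic (d1 <= 1/4)) as [H1|H1].
      * rewrite (decP_t (d1 <= 1/4)) by auto.
        destruct (classic (exists l, Iset L q 0 l)) as [HI|HI];
          [rewrite (decP_t (exists l, Iset L q 0 l)) by auto | rewrite (decP_f (exists l, Iset L q 0 l)) by auto; apply ext_le_None].
        apply ext_le_Some. eapply Rle_trans. apply (S2r 0%nat).
        { split; auto. unfold delta. rewrite INR_0. lra. }
        rewrite termr0. apply monoA; auto; lra.
      * rewrite (decP_f (d1 <= 1/4)) by auto. rewrite if_some. apply ext_le_Some.
        destruct (val_spec L q d1 ltac:(lra) ltac:(lra)) as [[E|[r [Hr E]]] _]; rewrite E.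
        -- eapply Rle_trans. apply S20. unfold term0. apply mono0; lra.
        -- assert (Hr2 : Rset L q d2 r).
           { destruct Hr as [Hr Hd]. split; auto. unfold delta in *.
             pose proof (pos_INR r). nra. }
           eapply Rle_trans. apply (S2r r); auto. unfold termr. apply monor; try lra.
           apply Hell. apply Hr. pose proof (pos_INR r). lra. apply Hr.
  - intros Hq0 d1 d2 Hd1 H12 Hd2.
    unfold nu_c. destruct (classic (L 1%nat)) as [HL1|HL1];
      [| rewrite decP_t by auto; apply ext_le_None].
    rewrite decP_f by tauto.
    replace (Nat.eqb (q 0%nat) 1) with false by (symmetry; apply Nat.eqb_neq; lia).
    destruct (classic (exists l, Iset L q 0 l)) as [HI|HI];
      [rewrite decP_t by auto | rewrite decP_f by auto; apply ext_le_None].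
    apply ext_le_Some. apply mono2; auto. apply pos_INR. 
Qed.
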